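(* Let $V$ be a $\mathbb{Z}$-graded vertex algebra such that $V=C_2(V)$, and let $W$ be an irreducible weak $V$-module. Then $W=\widetilde{C}_2(W)$.
   Context: A vertex algebra $(V,Y,\mathbf{1})$ has vertex operators $Y(v,z)=\sum_{n\in\mathbb{Z}}v_nz^{-n-1}$. A $\mathbb{Z}$-graded vertex algebra is a vertex algebra $V=\bigoplus_{n\in\mathbb{Z}}V_n$ with a conformal vector $\omega\in V_2$, $Y(\omega,z)=\sum_n L(n)z^{-n-2}$, whose modes satisfy the Virasoro relations with some central charge, such that $L(0)v=nv$ for $v\in V_n$ and $Y(L(-1)v,z)=\frac{d}{dz}Y(v,z)$. A weak $V$-module is a vector space $M$ with $Y_M(v,z)=\sum_n v_nz^{-n-1}\in(\mathrm{End}\,M)[[z,z^{-1}]]$ such that $u_nw=0$ for $n\gg0$, $Y_M(\mathbf{1},z)=\mathrm{id}_M$, and the Jacobi identity holds; it is irreducible if it has no weak submodules other than $0$ and itself. Define $C_2(V)=\mathrm{Span}_{\mathbb{C}}\{u_{-2}v\mid u,v\in V\}$ and, for a weak $V$-module $M$, $\widetilde{C}_2(M)=\mathrm{Span}_{\mathbb{C}}\{u_{-2}w\mid u\in V,\ w\in M\}$. $V$ (resp. $M$) is called $C_2$-cofinite if $V/C_2(V)$ (resp. $M/\widetilde{C}_2(M)$) is finite-dimensional. *)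

(* Defs.v *)
From HB Require Import structures.
From mathcomp Require Import all_boot all_order all_algebra.
Set Implicit Arguments. Unset Strict Implicit. Unset Printing Implicit Defensive.
Import Order.TTheory GRing.Theory Num.Theory.
Local Open Scope ring_scope.

Section VOA.
Variable K : numClosedFieldType.  (* stands for the complex numbers *)

Definition binz (m : int) (i : nat) : K :=
  (\prod_(j < i) (m - (j : nat)%:Z)%:~R) / (i`!)%:R.

Definition is_subspace (W : lmodType K) (P : W -> Prop) : Prop :=
  P 0 /\ (forall (a : K) x y, P x -> P y -> P (a *: x + y)).

Variables (V : lmodType K).

(* modes u_n acting on a space M: (act u n w) = u_n w *)
Definition mode_linear (M : lmodType K) (act : V -> int -> M -> M) : Prop :=
  (forall n (a : K) u u' w, act (a *: u + u') n w = a *: act u n w + act u' n w) /\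
  (forall n (a : K) u w w', act u n (a *: w + w') = a *: act u n w + act u n w').

Definition truncation (M : lmodType K) (act : V -> int -> M -> M) : Prop :=
  forall u w, exists N : int, forall n : int, N <= n -> act u n w = 0.

(* Jacobi identity in component (Borcherds) form; the formally infinite sums
   over i >= 0 are computed up to any N beyond which all terms vanish. *)
Definition jacobi (Y : V -> int -> V -> V) (M : lmodType K)
    (act : V -> int -> M -> M) : Prop :=
  forall (u v : V) (w : M) (l m n : int) (N : nat),
    (forall i : nat, (N <= i)%N ->
        [/\ Y u (l + i%:Z) v = 0, act v (n + i%:Z) w = 0 & act u (m + i%:Z) w = 0]) ->
    \sum_(i < N) binz m i *: act (Y u (l + (i : nat)%:Z) v) (m + n - (i : nat)%:Z) w =
    \sum_(i < N) ((-1) ^+ (i : nat) * binz l i) *: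
        (act u (l + m - (i : nat)%:Z) (act v (n + (i : nat)%:Z) w)
         - (-1) ^+ (absz l) *: act v (l + n - (i : nat)%:Z) (act u (m + (i : nat)%:Z) w)).

Definition is_vertex_algebra (Y : V -> int -> V -> V) (one : V) : Prop :=
  [/\ mode_linear Y, truncation Y,
      (forall n w, Y one n w = if n == -1 then w else 0),
      (forall v, Y v (-1) one = v /\ forall n : int, 0 <= n -> Y v n one = 0)
    & jacobi Y Y].

Definition is_Z_grading (Vg : int -> V -> Prop) : Prop :=
  [/\ (forall n, is_subspace (Vg n)),
      (forall v, exists (s : seq int) (f : int -> V),
          [/\ uniq s, (forall k, Vg k (f k)) & v = \sum_(k <- s) f k])
    & (forall (s : seq int) (f : int -> V), uniq s ->
          (forall k, k \in s -> Vg k (f k)) -> \sum_(k <- s) f k = 0 ->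
          forall k, k \in s -> f k = 0)].

Definition is_Z_graded_VA (Y : V -> int -> V -> V) (one : V)
    (Vg : int -> V -> Prop) (omega : V) : Prop :=
  let L := fun n : int => Y omega (n + 1) in
  [/\ is_vertex_algebra Y one /\ is_Z_grading Vg, Vg 2 omega,
      (exists c : K, forall (m n : int) (x : V),
          L m (L n x) - L n (L m x) =
          (m - n)%:~R *: L (m + n) x
          + (if m + n == 0 then ((m ^+ 3 - m)%:~R / 12%:R) * c else 0) *: x),
      (forall (n : int) v, Vg n v -> L 0 v = n%:~R *: v)
    & (forall v (n : int) w, Y (L (-1) v) n w = - (n%:~R) *: Y v (n - 1) w)].

Definition in_C2 (Y : V -> int -> V -> V) (x : V) : Prop :=
  exists s : seq (K * V * V), x = \sum_(t <- s) t.1.1 *: Y t.1.2 (-2) t.2.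

Definition is_weak_module (Y : V -> int -> V -> V) (one : V)
    (M : lmodType K) (YM : V -> int -> M -> M) : Prop :=
  [/\ mode_linear YM, truncation YM,
      (forall n w, YM one n w = if n == -1 then w else 0)
    & jacobi Y YM].

Definition is_weak_submodule (M : lmodType K) (YM : V -> int -> M -> M)
    (P : M -> Prop) : Prop :=
  is_subspace P /\ (forall u n w, P w -> P (YM u n w)).

Definition irreducible_module (M : lmodType K) (YM : V -> int -> M -> M) : Prop :=
  forall P : M -> Prop, is_weak_submodule YM P ->
    (forall w, P w -> w = 0) \/ (forall w, P w).

Definition in_C2_mod (M : lmodType K) (YM : V -> int -> M -> M) (x : M) : Prop :=
  exists s : seq (K * V * M), x = \sum_(t <- s) t.1.1 *: YM t.1.2 (-2) t.2.

End VOA.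

(* Main.v *)
Require Import Defs.
From HB Require Import structures.
From mathcomp Require Import all_boot all_order all_algebra.
Import Order.TTheory GRing.Theory Num.Theory.
Local Open Scope ring_scope.

Section Aux.
Variables (K : numClosedFieldType) (V : lmodType K) (M : lmodType K)
  (YM : V -> int -> M -> M).

Lemma C0 : in_C2_mod YM 0.
Proof. by exists [::]; rewrite big_nil. Qed.

Lemma CD x y : in_C2_mod YM x -> in_C2_mod YM y -> in_C2_mod YM (x + y).
Proof. by move=> [s1 ->] [s2 ->]; exists (s1 ++ s2); rewrite big_cat. Qed.

Lemma CZ (a : K) x : in_C2_mod YM x -> in_C2_mod YM (a *: x).
Proof.
move=> [s ->]; exists [seq (a * t.1.1, t.1.2, t.2) | t <- s].
rewrite big_map scaler_sumr; apply: eq_bigr => t _ /=; by rewrite scalerA.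
Qed.

Lemma CB x y : in_C2_mod YM x -> in_C2_mod YM y -> in_C2_mod YM (x - y).
Proof. by move=> hx hy; apply: CD hx _; rewrite -scaleN1r; apply: CZ. Qed.

Lemma Cbase u x : in_C2_mod YM (YM u (-2) x).
Proof. by exists [:: (1, u, x)]; rewrite big_seq1 scale1r. Qed.

Lemma Csum (I : Type) (r : seq I) (F : I -> M) :
  (forall i, in_C2_mod YM (F i)) -> in_C2_mod YM (\sum_(i <- r) F i).
Proof.
move=> h; elim: r => [|i r IH]; first by rewrite big_nil; apply: C0.
by rewrite big_cons; apply: CD.
Qed.

Lemma trunc_nat (N n : int) : exists k : nat, forall i : nat, (k <= i)%N -> N <= n + i%:Z.
Proof.
exists `|N - n|%N => i hi.
rewrite -lerBlDl; apply: le_trans (ler_norm _) _.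
by rewrite -abszE lez_nat.
Qed.

Lemma act0 (W : lmodType K) (act : V -> int -> W -> W) n w :
  mode_linear act -> act 0 n w = 0.
Proof.
move=> [h _]; have := h n 1 0 0 w; rewrite !scale1r addr0.
by move=> e; apply: (addrI (act 0 n w)); rewrite addr0 -e.
Qed.

Lemma act_sum (W : lmodType K) (act : V -> int -> W -> W) (I : Type)
  (s : seq I) (c : I -> K) (f : I -> V) n w :
  mode_linear act ->
  act (\sum_(t <- s) c t *: f t) n w = \sum_(t <- s) c t *: act (f t) n w.
Proof.
move=> h; elim: s => [|t s IH]; first by rewrite !big_nil act0.
by rewrite !big_cons (proj1 h) IH.
Qed.
Lemma act0r (W : lmodType K) (act : V -> int -> W -> W) u n :
  mode_linear act -> act u n 0 = 0.
Proof.
move=> [_ h]; have := h n 1 u 0 0; rewrite !scale1r addr0.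
by move=> e; apply: (addrI (act u n 0)); rewrite addr0 -e.
Qed.

Lemma binz0 m : binz K m 0 = 1.
Proof. by rewrite /binz big_ord0 fact0 divr1. Qed.

Lemma binz1 m : binz K m 1 = m%:~R.
Proof. by rewrite /binz big_ord1 /= subr0 divr1. Qed.

Lemma binz0S i : binz K 0 i.+1 = 0.
Proof. by rewrite /binz big_ord_recl /= subrr mul0r mul0r. Qed.
End Aux.

Section D.
Variables (K : numClosedFieldType) (V : lmodType K) (M : lmodType K)
  (Y : V -> int -> V -> V) (one : V) (YM : V -> int -> M -> M).
Hypothesis Ycr : forall v, Y v (-1) one = v /\ forall n : int, 0 <= n -> Y v n one = 0.
Hypothesis Mlin : mode_linear YM.
Hypothesis Mtr : truncation YM.
Hypothesis Mone : forall n w, YM one n w = if n == -1 then w else 0.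
Hypothesis Mjac : jacobi Y YM.

Lemma Dlem v (p : int) w : YM (Y v (-2) one) p w = - p%:~R *: YM v (p - 1) w.
Proof.
have [N0 HN0] := Mtr v w.
have [k Hk] := trunc_nat N0 (p + 1).
have H : forall i : nat, (k.+2 <= i)%N -> [/\ Y v (-2 + i%:Z) one = 0,
   YM one (-1 + i%:Z) w = 0 & YM v (p + 1 + i%:Z) w = 0].

  move=> i hi; split.
  - apply (proj2 (Ycr v)); rewrite -lerBlDl sub0r opprK lez_nat.
    by apply: leq_trans hi.
  - rewrite Mone; case: eqP => // /eqP; rewrite -subr_eq0 opprK addrC addrA.
    by move: hi; case: i.
  - by apply: HN0; apply: Hk; apply: ltnW; apply: ltnW.
have J := Mjac v one w (-2) (p + 1) (-1) k.+2 H.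
move: J; rewrite 2!big_ord_recl big1; last first.
  move=> i _; rewrite (proj2 (Ycr v)) ?linear0 //.
  by rewrite act0 // scaler0.
rewrite /=; have -> : bump 0 0 = 1%N by [].
rewrite binz0 binz1 scale1r addr0 (_ : -2 + 1%:Z = -1) // (proj1 (Ycr v)) addr0 addrK.
rewrite big_ord_recl big1; last first.
  move=> i _; rewrite !Mone /=.
  by rewrite act0r // scaler0 subrr scaler0.
rewrite /= addr0 !Mone /= expr0 mul1r binz0 scale1r scaler0 !subr0 addr0.
have -> : -2 + (p + 1) = p - 1 by rewrite addrC -addrA.
move/(canRL (addrK _)) => ->.
rewrite -{1}[YM v (p - 1) w]scale1r -scalerBl; congr (_ *: _).
by rewrite intrD opprD addrA addrAC (_ : 1%:~R = 1 :> K) // subrr add0r.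
Qed.
Lemma Blem (k : nat) u x : in_C2_mod YM (YM u (- (k.+2)%:Z) x).
Proof.
elim: k u => [|k IH] u; first exact: Cbase.
have D := Dlem u (- (k.+2)%:Z) x.
have e : - (k.+2)%:Z - 1 = - (k.+3)%:Z by rewrite -opprD -PoszD addn1.
rewrite e opprK pmulrn in D.
have nz : (k.+2)%:R != 0 :> K by rewrite pnatr_eq0.
have -> : YM u (- (k.+3)%:Z) x = (k.+2)%:R^-1 *: YM (Y u (-2) one) (- (k.+2)%:Z) x.
  by rewrite D scalerA mulVf // scale1r.
by apply: CZ; apply: IH.
Qed.

Lemma Blem2 (n : int) u x : n <= -2 -> in_C2_mod YM (YM u n x).
Proof.
case: n => [n|n]; first by [].
case: n => [|n] //= _.
by have := Blem n u x; rewrite NegzE.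
Qed.
Hypothesis Ytr : truncation Y.

Lemma Cterm u v w : in_C2_mod YM (YM (Y u (-2) v) (-1) w).
Proof.
have [N1 H1] := Ytr u v; have [N2 H2] := Mtr v w; have [N3 H3] := Mtr u w.
have [k1 K1] := trunc_nat N1 (-2); have [k2 K2] := trunc_nat N2 (-1).
have [k3 K3] := trunc_nat N3 0.
have H : forall i : nat, ((maxn k1 (maxn k2 k3)).+1 <= i)%N ->
  [/\ Y u (-2 + i%:Z) v = 0, YM v (-1 + i%:Z) w = 0 & YM u (0 + i%:Z) w = 0].
  move=> i /ltnW; rewrite !geq_max => /and3P [a b c].
  by split; [apply: H1; apply: K1 | apply: H2; apply: K2 | apply: H3; apply: K3].
have J := Mjac u v w (-2) 0 (-1) _ H.
move: J; rewrite big_ord_recl big1; last first.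
  by move=> i _; rewrite lift0 binz0S scale0r.
rewrite /= binz0 scale1r !addr0 add0r => ->.
apply: Csum => i; apply: CZ; apply: CB; last apply: CZ; apply: Blem2.
  by case: (nat_of_ord i).
by case: (nat_of_ord i).
Qed.
End D.

Theorem proposition2p13 (K : numClosedFieldType) (V : lmodType K)
    (Y : V -> int -> V -> V) (one : V) (Vg : int -> V -> Prop) (omega : V)
    (HV : is_Z_graded_VA Y one Vg omega)
    (HC2 : forall x : V, in_C2 Y x)
    (M : lmodType K) (YM : V -> int -> M -> M)
    (HM : is_weak_module Y one YM)
    (Hirr : irreducible_module YM) :
  forall w : M, in_C2_mod YM w.
Proof.
case: HV => [[[Ylin Ytr Yone Ycr Yjac] _] _ _ _ _].
case: HM => [Mlin Mtr Mone Mjac] w.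
have -> : w = YM one (-1) w by rewrite Mone eqxx.
have [s ->] := HC2 one.
rewrite act_sum //; apply: Csum => t; apply: CZ.
exact: (@Cterm K V M Y one YM Ycr Mlin Mtr Mone Mjac Ytr).
Qed.
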